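(* Let $t \geq 1$ and $k \geq 1$ be integers, and let $\mathcal{F}$ be a finite family of finite sets with $\alpha(\mathcal{F}) \geq t$ and $\beta(\mathcal{F},t) = \frac{l(\mathcal{F},t)}{|\mathcal{F}|}$. Let $\mathcal{A}_1, \dots, \mathcal{A}_k$ be cross-$t$-intersecting sub-families of $\mathcal{F}$ such that $\sum_{i=1}^k |\mathcal{A}_i|$ is maximum among all $k$-tuples of cross-$t$-intersecting sub-families of $\mathcal{F}$. Then \[\sum_{i=1}^k |\mathcal{A}_i| = \begin{cases} |\mathcal{F}| & \text{if } k \leq \frac{|\mathcal{F}|}{l(\mathcal{F},t)};\\ k\, l(\mathcal{F},t) & \text{if } k \geq \frac{|\mathcal{F}|}{l(\mathcal{F},t)}.\end{cases}\] Moreover, (i) if $k < \frac{|\mathcal{F}|}{l(\mathcal{F},t)}$, then $\mathcal{A}_i = \mathcal{A}_i^{t,-}$ for all $i \in [k]$, and $\mathcal{A}_1, \dots, \mathcal{A}_k$ partition $\mathcal{F}$; (ii) if $k > \frac{|\mathcal{F}|}{l(\mathcal{F},t)}$, then $\mathcal{A}_1 = \dots = \mathcal{A}_k = \mathcal{L}$ for some largest $t$-intersecting sub-family $\mathcal{L}$ of $\mathcal{F}$.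
   Context: All sets and families are finite. A family $\mathcal{A}$ is $t$-intersecting if $|A \cap B| \geq t$ for all $A, B \in \mathcal{A}$ with $A \neq B$. Families $\mathcal{A}_1, \dots, \mathcal{A}_k$ (not necessarily distinct or non-empty) are cross-$t$-intersecting if for all $i \neq j$, $|A \cap B| \geq t$ for every $A \in \mathcal{A}_i$, $B \in \mathcal{A}_j$. For non-empty $\mathcal{F}$: $\alpha(\mathcal{F}) = \max\{|F| : F \in \mathcal{F}\}$; $l(\mathcal{F},t)$ is the size of a largest $t$-intersecting sub-family of $\mathcal{F}$. For a family $\mathcal{A}$, $\mathcal{A}^{t,+} = \{A \in \mathcal{A} : |A \cap B| \geq t \text{ for all } B \in \mathcal{A}\setminus\{A\}\}$ and $\mathcal{A}^{t,-} = \mathcal{A} \setminus \mathcal{A}^{t,+}$. For $\mathcal{A} \subseteq \mathcal{F}$, $\beta(\mathcal{F},t,\mathcal{A}) = \frac{l(\mathcal{F},t) - |\mathcal{A}^{t,+}|}{|\mathcal{A}^{t,-}|}$ if $\mathcal{A}^{t,-} \neq \emptyset$, and $\frac{l(\mathcal{F},t)}{|\mathcal{F}|}$ otherwise; $\beta(\mathcal{F},t) = \min_{\mathcal{A} \subseteq \mathcal{F}} \beta(\mathcal{F},t,\mathcal{A})$. $[k] = \{1,\dots,k\}$. *)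

(* Defs.v *)
From HB Require Import structures.
From mathcomp Require Import all_boot all_order all_algebra.
Set Implicit Arguments. Unset Strict Implicit. Unset Printing Implicit Defensive.
Import Order.TTheory GRing.Theory Num.Theory.

Section Defs.
Variable T : finType.

Definition t_intersecting (t : nat) (FA : {set {set T}}) : Prop :=
  forall A B, A \in FA -> B \in FA -> A != B -> t <= #|A :&: B|.

Definition cross_t_intersecting (t k : nat) (As : 'I_k -> {set {set T}}) : Prop :=
  forall i j : 'I_k, i != j ->
    forall A B, A \in As i -> B \in As j -> t <= #|A :&: B|.

Definition alpha (F : {set {set T}}) : nat := \max_(X in F) #|X|.

Definition t_intersectingb (t : nat) (FA : {set {set T}}) : bool :=
  [forall A in FA, forall B in FA, (A != B) ==> (t <= #|A :&: B|)].

Definition lsize (F : {set {set T}}) (t : nat) : nat :=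
  \max_(G in powerset F | t_intersectingb t G) #|G|.

Definition Aplus (t : nat) (FA : {set {set T}}) : {set {set T}} :=
  [set A in FA | [forall B in FA :\ A, t <= #|A :&: B|]].

Definition Aminus (t : nat) (FA : {set {set T}}) : {set {set T}} :=
  FA :\: Aplus t FA.

Local Open Scope ring_scope.

Definition beta_at (F : {set {set T}}) (t : nat) (FA : {set {set T}}) : rat :=
  if Aminus t FA != set0 then
    ((lsize F t)%:R - #|Aplus t FA|%:R) / #|Aminus t FA|%:R
  else (lsize F t)%:R / #|F|%:R.

(* beta(F,t) = min over sub-families A of F of beta(F,t,A);
   the fold is seeded with the value at A = set0 (itself a candidate). *)
Definition beta (F : {set {set T}}) (t : nat) : rat :=
  \big[Num.min/beta_at F t set0]_(FA in powerset F) beta_at F t FA.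

End Defs.

(* Main.v *)
Require Import Defs.
From HB Require Import structures.
From mathcomp Require Import all_boot all_order all_algebra zify.
Import Order.TTheory GRing.Theory Num.Theory.
Set Implicit Arguments. Unset Strict Implicit.

Section H.
Variable T : finType.
Implicit Types U F G : {set {set T}}.

Lemma inAplusP t U X : reflect (X \in U /\ forall B, B \in U -> B != X -> t <= #|X :&: B|) (X \in Aplus t U).
Proof.
rewrite /Aplus inE; apply: (iffP andP) => [[XU /forallP H]|[XU H]]; split => //.
- move=> B BU BX; have := H B; rewrite !inE BX BU /=; by [].
- apply/forallP => B; apply/implyP; rewrite !inE => /andP[BX BU]; exact: H.
Qed.

Lemma Aplus_sub t U : Aplus t U \subset U.
Proof. by apply/subsetP => X /inAplusP[]. Qed.

Lemma Aplus_tib t U : t_intersectingb t (Aplus t U).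
Proof.
apply/forallP => A; apply/implyP => /inAplusP[AU HA].
apply/forallP => B; apply/implyP => /inAplusP[BU _]; apply/implyP => AB.
by apply: HA => //; rewrite eq_sym.
Qed.

Lemma tib_le_lsize t F G : G \subset F -> t_intersectingb t G -> #|G| <= lsize F t.
Proof. by move=> GF tG; apply: (@leq_bigmax_cond _ (fun G => (G \in powerset F) && t_intersectingb t G)); rewrite inE GF. Qed.

Lemma bigcup_seqP (I : eqType) (r : seq I) (f : I -> {set {set T}}) X :
  X \in \bigcup_(i <- r) f i -> exists2 j, j \in r & X \in f j.
Proof.
elim: r => [|a r IH]; first by rewrite big_nil inE.
rewrite big_cons inE => /orP[Xa|/IH[j jr Xj]]; first by exists a; rewrite ?inE ?eqxx.
by exists j; rewrite // inE jr orbT.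
Qed.

Lemma sum_disj (I : eqType) (r : seq I) (f : I -> {set {set T}}) :
  uniq r -> (forall i j, i != j -> f i :&: f j = set0) ->
  \sum_(i <- r) #|f i| = #|\bigcup_(i <- r) f i|.
Proof.
move=> + D; elim: r => [|a r IH] /=; first by rewrite !big_nil cards0.
case/andP=> ar ur; rewrite !big_cons IH // cardsU.
suff -> : f a :&: \bigcup_(i <- r) f i = set0 by rewrite cards0 subn0.
apply/setP => X; rewrite !inE; apply/negP => /andP[Xa /bigcup_seqP[j jr Xj]].
have aj : a != j by apply: contraNneq ar => ->.
by have := D _ _ aj; move/setP/(_ X); rewrite !inE Xa Xj.
Qed.
Lemma tibP t G : t_intersectingb t G -> t_intersecting t G.
Proof.
move=> /forallP H A B AG BG AB; have := H A; rewrite AG /= => /forallP/(_ B).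
by rewrite BG AB.
Qed.

Lemma exists_L t F X0 : X0 \in F -> t <= #|X0| -> exists L : {set {set T}}, [/\ L \subset F,
  t_intersectingb t L, #|L| = lsize F t & forall X, X \in L -> t <= #|X|].
Proof.
move=> X0F X0t.
have tib1 : t_intersectingb t [set X0].
  apply/forallP => A; apply/implyP; rewrite inE => /eqP->.
  apply/forallP => B; apply/implyP; rewrite inE => /eqP->; by rewrite eqxx.
have l1 : 0 < lsize F t.
  by have := @tib_le_lsize t F [set X0]; rewrite cards1; apply => //; rewrite sub1set.
have : 0 < #|[pred G : {set {set T}} | (G \in powerset F) && t_intersectingb t G]|.
  by apply/card_gt0P; exists [set X0]; rewrite !inE /= ?powersetE ?sub1set ?X0F.
case/(eq_bigmax_cond (fun G : {set {set T}} => #|G|)) => L0; rewrite inE.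
case/andP; rewrite powersetE => L0F tL0 HL0'.
have HL0 : lsize F t = #|L0| by rewrite -HL0' /lsize; apply: eq_bigl => G; rewrite !inE.
case: (leqP (lsize F t) 1) => [l1'|l2].
  exists [set X0]; split => //; first by rewrite sub1set.
    by rewrite cards1; apply/eqP; rewrite eqn_leq l1 l1'.
  by move=> X; rewrite inE => /eqP->.
exists L0; split; [done|done|by rewrite HL0|].
move=> X XL.
have : 0 < #|L0 :\ X|.
  by move: l2; rewrite HL0 (cardsD1 X L0) XL.
rewrite card_gt0 => /set0Pn[Y]; rewrite !inE => /andP[YX YL].
apply: leq_trans (subset_leq_card (subsetIl X Y)).
by apply: (tibP tL0) => //; rewrite eq_sym.
Qed.
End H.
Lemma arith (S m p k l n : nat) : (S <= m + k * p -> n <= S -> k * l <= S -> p <= l -> m + p <= n -> 0 < l ->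
  (0 < m -> l * m <= (l - p) * n) ->
  (k * l <= n -> S = n) /\ (n <= k * l -> S = k * l) /\ (k * l < n -> p = 0 /\ 0 < m) /\ (n < k * l -> m = 0 /\ p = l))%N.
Proof.
move=> h1 h2 h3 h4 h5 h6 h7.
have kp : (k * p <= k * l)%N by rewrite leq_mul2l h4 orbT.
case: (posnP m) => [m0|mpos].
  subst m; rewrite add0n in h1.
  split; first by lia. split; first by lia. split; first by lia.
  move=> nkl; split => //.
  have k0 : (0 < k)%N by case: k nkl {h1 h3 kp}; rewrite ?mul0n.
  by apply/eqP; rewrite eqn_leq h4 -(leq_pmul2l k0); lia.
have h8 := h7 mpos.
set q := (l - p) in h8.
have lq : l = (q + p)%N by rewrite /q subnK.
rewrite lq in h8 h3 kp h6 *.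
have lS : ((q + p) * S <= (q+p) * m + (q+p) * k * p)%N.
  by rewrite -mulnA -mulnDr leq_mul2l h1 orbT.
set L := (q + p)%N in lS h8 h3 kp h6 *.
have e1 : (L * S <= q * n + L * k * p)%N by lia.
have Lc : forall a b, (L * a <= L * b)%N -> (a <= b)%N by move=> a b; rewrite leq_pmul2l.
have Lc' : forall a b, (L * a < L * b)%N -> (a < b)%N by move=> a b; rewrite ltn_pmul2l.
split.
  move=> kln; have : (k * L * p <= n * p)%N by rewrite leq_mul2r kln orbT.
  move=> e2; apply/eqP; rewrite eqn_leq h2 andbT; apply: Lc; lia.
split.
  move=> nkl; have : (q * n <= q * (k * L))%N by rewrite leq_mul2l nkl orbT.
  move=> e2; apply/eqP; rewrite eqn_leq h3 andbT; apply: Lc; lia.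
split.
  move=> kln; split => //; case: (posnP p) => // ppos.
  have : (k * L * p < n * p)%N by rewrite ltn_mul2r kln ppos.
  move=> e2; have : (S < n)%N by apply: Lc'; lia.
  by rewrite ltnNge h2.
move=> nkl; exfalso; case: (posnP q) => [q0|qpos].
  by move: h8; rewrite q0 mul0n leqn0 muln_eq0 (negbTE (lt0n_neq0 mpos)) orbF => /eqP L0; move: h6; rewrite L0.
have : (q * n < q * (k * L))%N by rewrite ltn_mul2l qpos nkl.
move=> e2; have : (S < k * L)%N by apply: Lc'; lia.
by rewrite ltnNge h3.
Qed.
Unset Implicit Arguments.
Local Open Scope ring_scope.
Theorem theorem4p1 (T : finType) (t k : nat) (F : {set {set T}})
  (As : 'I_k -> {set {set T}}) :
  (1 <= t)%N -> (1 <= k)%N ->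
  (t <= alpha F)%N ->
  beta F t = (lsize F t)%:R / (#|F|)%:R :> rat ->
  (forall i, As i \subset F) ->
  cross_t_intersecting t As ->
  (forall Bs : 'I_k -> {set {set T}},
     (forall i, Bs i \subset F) -> cross_t_intersecting t Bs ->
     (\sum_(i < k) #|Bs i| <= \sum_(i < k) #|As i|)%N) ->
  ((k%:R <= (#|F|)%:R / (lsize F t)%:R :> rat) ->
     (\sum_(i < k) #|As i|)%N = #|F|) /\
  ((k%:R >= (#|F|)%:R / (lsize F t)%:R :> rat) ->
     (\sum_(i < k) #|As i|)%N = (k * lsize F t)%N) /\
  ((k%:R < (#|F|)%:R / (lsize F t)%:R :> rat) ->
     (forall i, As i = Aminus t (As i)) /\
     (forall i j : 'I_k, i != j -> As i :&: As j = set0) /\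
     \bigcup_(i < k) As i = F) /\
  ((k%:R > (#|F|)%:R / (lsize F t)%:R :> rat) ->
     exists L : {set {set T}},
       [/\ L \subset F, t_intersecting t L, #|L| = lsize F t &
           forall i, As i = L]).
Proof.
move=> t1 k1 tal Hbeta AsF cross maxA.
set n := #|F|; set l := lsize F t; set S := (\sum_(i < k) #|As i|)%N.
set U := \bigcup_(i < k) As i.
have UF : U \subset F by apply/bigcupsP => i _; exact: AsF.
set Up := Aplus t U.
have key1 : forall i j X, i != j -> X \in As i -> X \in As j -> X \in Up.
  move=> i j X ij Xi Xj; apply/inAplusP; split; first by apply/bigcupP; exists i.
  move=> B /bigcupP[h _ Bh] BX; case: (eqVneq h i) => [hi|hi].
    by subst h; apply: (cross j i) => //; rewrite eq_sym.
  by apply: (cross i h) => //; rewrite eq_sym.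
have key2 : forall i X, X \in Aplus t (As i) -> X \in Up.
  move=> i X /inAplusP[Xi HX]; apply/inAplusP; split; first by apply/bigcupP; exists i.
  move=> B /bigcupP[h _ Bh] BX; case: (eqVneq h i) => [hi|hi].
    by subst h; apply: HX.
  by apply: (cross i h) => //; rewrite eq_sym.
have pl : (#|Up| <= l)%N.
  exact: tib_le_lsize (subset_trans (Aplus_sub _ _) UF) (Aplus_tib _ _).
have mpU : (#|Up| + #|Aminus t U| = #|U|)%N.
  by rewrite /Aminus -/Up -(cardsID Up U) (setIidPr (Aplus_sub _ _)).
have Un : (#|U| <= n)%N by exact: subset_leq_card UF.
have [X0 X0F X0t] : exists2 X0, X0 \in F & (t <= #|X0|)%N.
  case: (set_0Vmem F) => [F0|[X XF]].
    by move: tal; rewrite /alpha F0 big_set0 leqn0 => /eqP t0; move: t1; rewrite t0.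
  have : (0 < #|F|)%N by rewrite card_gt0; apply/set0Pn; exists X.
  case/(eq_bigmax_cond (fun X : {set T} => #|X|)) => Y YF HY.
  by exists Y => //; rewrite -HY.
have n_pos : (0 < n)%N by rewrite card_gt0; apply/set0Pn; exists X0.
have l_pos : (0 < l)%N.
  have := @tib_le_lsize _ t F [set X0]; rewrite cards1; apply; first by rewrite sub1set.
  apply/forallP => A; apply/implyP; rewrite inE => /eqP->.
  apply/forallP => B; apply/implyP; rewrite inE => /eqP->; by rewrite eqxx.
set m := #|Aminus t U|; set p := #|Up|.
have Hb : (0 < m)%N -> (l * m <= (l - p) * n)%N.
  move=> m_pos.
  have : beta F t <= beta_at F t U.
    by rewrite /beta; apply: bigmin_le_cond; rewrite powersetE.
  rewrite Hbeta /beta_at ifT; last by rewrite -card_gt0.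
  rewrite -/l -/Up -/m -/p.
  rewrite ler_pdivrMr ?ltr0n // mulrAC ler_pdivlMr ?ltr0n // -natrB // -!natrM ler_nat.
  by rewrite mulnC.
have S_ge_n : (n <= S)%N.
  pose i0 : 'I_k := Ordinal k1.
  pose Bs := fun i : 'I_k => if i == i0 then F else set0.
  suff E : (\sum_(i<k) #|Bs i|)%N = n.
    rewrite -E; apply: maxA.
  - by move=> i; rewrite /Bs; case: ifP => _; rewrite ?sub0set.
  - move=> i j ij A B; rewrite /Bs; case: eqP => [iE|_]; case: eqP => [jE|_]; rewrite ?inE //.
    by move: ij; rewrite iE jE eqxx.
  rewrite (bigD1 i0) //= /Bs eqxx big1 ?addn0 // => i /negbTE ->; exact: cards0.
have S_ge_kl : (k * l <= S)%N.
  have [L [LF tL cL Lt]] := exists_L X0F X0t.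
  have := maxA (fun _ => L) (fun _ => LF); rewrite -/S sum_nat_const card_ord cL; apply.
  move=> i j ij A B AL BL; case: (eqVneq A B) => [<-|AB]; first by rewrite setIid; exact: Lt.
  exact: (tibP tL).
have S_le : (S <= m + k * p)%N.
  have -> : S = (\sum_(i<k) #|As i :&: Up| + \sum_(i<k) #|As i :\: Up|)%N.
    rewrite /S -big_split; by apply: eq_bigr => i _; rewrite /= cardsID.
  rewrite addnC leq_add //.
    rewrite (@sum_disj _ _ (index_enum 'I_k)) ?index_enum_uniq //.
      apply: subset_leq_card; apply/subsetP => X /bigcup_seqP[j _].
      rewrite /Aminus -/Up !in_setD => /andP[nX Xj]; rewrite nX /=.
      by apply/bigcupP; exists j.
    move=> i j ij; apply/setP => X; rewrite in_setI !in_setD in_set0; apply/negP.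
    case/andP=> /andP[nX Xi] /andP[_ Xj].
    by rewrite (key1 i j X ij Xi Xj) in nX.
  have -> : (k * p = \sum_(i<k) p)%N by rewrite sum_nat_const card_ord.
  by apply: leq_sum => i _; apply: subset_leq_card; apply: subsetIr.
have AsU : forall i, As i \subset U by move=> i; exact: (bigcup_sup i).
have mpn : (m + p <= n)%N by rewrite addnC /m /p mpU.
have [Ca [Cb [Cc Cd]]] := arith S_le S_ge_n S_ge_kl pl mpn l_pos Hb.
have lR : (0 < l%:R :> rat) by rewrite ltr0n.
split.
  by rewrite ler_pdivlMr // -natrM ler_nat; exact: Ca.
split.
  by rewrite ler_pdivrMr // -natrM ler_nat; exact: Cb.
split.
  rewrite ltr_pdivlMr // -natrM ltr_nat => kln.
  have [p0 mpos] := Cc kln.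
  have Up0 : Up = set0 by apply/eqP; rewrite -cards_eq0 -/p p0.
  split.
    move=> i; apply/setP => X; rewrite /Aminus in_setD.
    by case: (boolP (X \in Aplus t (As i))) => [/key2|//]; rewrite Up0 inE.
  split.
    move=> i j ij; apply/setP => X; rewrite in_setI in_set0; apply/negP => /andP[Xi Xj].
    by have := key1 i j X ij Xi Xj; rewrite Up0 inE.
  apply/eqP; rewrite eqEcard UF /=.
  have := Ca (ltnW kln); rewrite -/S => SE.
  have h2 : #|Aminus t U| = #|U| by rewrite -mpU -/p p0.
  have : (S <= m)%N by move: S_le; rewrite p0 muln0 addn0.
  by rewrite -h2 -/m -/n -SE.
rewrite ltr_pdivrMr // -natrM ltr_nat => nkl.
have [m0 pl'] := Cd nkl.
have UpU : Up = U.
  by apply/eqP; rewrite eqEcard Aplus_sub /= -mpU -/m m0 addn0.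
have cU : #|U| = l by rewrite -UpU.
exists U; split => //.
  by rewrite -UpU; apply: tibP; exact: Aplus_tib.
have SE : S = (k * l)%N by apply: Cb; exact: ltnW.
have E : (\sum_(i<k) (#|U| - #|As i|) + S = k * #|U|)%N.
  rewrite /S -big_split /= -[in RHS](card_ord k) -sum_nat_const.
  by apply: eq_bigr => i _; rewrite subnK // subset_leq_card.
have : (\sum_(i<k) (#|U| - #|As i|) == 0)%N by rewrite -(eqn_add2r S) add0n E SE cU.
rewrite sum_nat_eq0 => /forallP H i.
apply/eqP; rewrite eqEcard AsU /=; by rewrite -subn_eq0; have := H i.
Qed.
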